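(* Let $V$ be an $\mathrm{FI}_G$-module which is presented in finite degree. Then for all $a\ge1$ and $i\ge1$, $$\deg H_i^{D^a}(V)\le \mathrm{dwidth}(V)-1+i-a.$$
   Context: Fix a commutative ring $k$ and a group $G$. $\mathrm{FI}_G$ is the category with objects $[n]$ ($n\ge0$) and morphisms $[n]\to[m]$ the pairs $(f,g)$ with $f$ injective and $g:[n]\to G$ a map of sets; composition $(f,g)\circ(f',g')=(f\circ f',h)$, $h(x)=g'(x)\,g(f'(x))$. $G_n=\mathfrak S_n\wr G$. An $\mathrm{FI}_G$-module is a functor $V:\mathrm{FI}_G\to\mathrm{Mod}_k$, $V_n=V([n])$. $M(n)_m=k[\mathrm{Hom}_{\mathrm{FI}_G}([n],[m])]$; for a $k[G_n]$-module $W$, $M(W)_m=W\otimes_{k[G_n]}k[\mathrm{Hom}_{\mathrm{FI}_G}([n],[m])]$; direct sums of these are relatively projective. $\deg V=\sup\{n:V_n\ne0\}$ ($\sup\emptyset=-\infty$). Generated in degree $\le m$: surjection $\bigoplus M(n_i)\to V$, $n_i\le m$; related in degree $\le r$: exact $0\to K\to M\to V\to0$, $M$ relatively projective, $K$ generated in degree $\le r$; presented in finite degree: both finite. $\Sigma$ sends $[n]\mapsto[n+1]$ and $(f,g)\mapsto(f_+,g_+)$ ($f_+$ extends $f$ by $n+1\mapsto m+1$, $g_+$ extends $g$ by $n+1\mapsto1_G$); $SV=V\circ\Sigma$; $\iota:V\to SV$ is $V(f^n,\mathbf1)$ in degree $n$. $DV=\mathrm{coker}(\iota)$, $D^a$ its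 $a$-th iterate, $H_i^{D^a}$ left derived functors of $D^a$. $\mathrm{dwidth}(V)=\sup_{a\ge1}(\deg H_1^{D^a}(V)+a)\in\mathbb Z\cup\{\pm\infty\}$ (with $-\infty+c=-\infty$). *)

(* Defs.v *)
(* Modules are encoded as
   "raw setoid modules": a carrier, an equivalence, operations; all axioms are
   separate Prop predicates.  Quotients (cokernels) are obtained by coarsening
   the equivalence. *)
From HB Require Import structures.
From mathcomp Require Import all_boot all_order all_algebra.
Set Implicit Arguments. Unset Strict Implicit. Unset Printing Implicit Defensive.
Import GRing.Theory.
Local Open Scope ring_scope.

Record AbsGroup := {
  gcar :> Type;
  gmul : gcar -> gcar -> gcar;
  gone : gcar;
  ginv : gcar -> gcar;
  gmulA : forall x y z, gmul x (gmul y z) = gmul (gmul x y) z;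
  gmul1 : forall x, gmul gone x = x;
  gmulg1 : forall x, gmul x gone = x;
  gmulVg : forall x, gmul (ginv x) x = gone;
  gmulgV : forall x, gmul x (ginv x) = gone }.

Inductive ExtZ := NegInf | Fin of int | PosInf.

Definition eaddz (e : ExtZ) (c : int) : ExtZ :=
  match e with Fin z => Fin (z + c) | e' => e' end.

Definition ele (e e' : ExtZ) : Prop :=
  match e, e' with
  | NegInf, _ => True
  | _, PosInf => True
  | Fin z, Fin z' => (z <= z')%R
  | _, _ => False
  end.

Definition ext_lt_nat (e : ExtZ) (n : nat) : Prop :=
  match e with NegInf => True | Fin z => (z < n%:Z)%R | PosInf => False end.

Section FIG.
Variables (k : comPzRingType) (G : AbsGroup).

Record FIHom (n m : nat) := {
  hf : 'I_n -> 'I_m;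
  hinj : injective hf;
  hg : 'I_n -> G }.

Definition FIcomp n m l (phi : FIHom n m) (psi : FIHom l n) : FIHom l m :=
  {| hf := hf phi \o hf psi;
     hinj := inj_comp (@hinj _ _ phi) (@hinj _ _ psi);
     hg := fun x => gmul (hg psi x) (hg phi (hf psi x)) |}.

Definition FIid n : FIHom n n :=
  {| hf := id; hinj := @inj_id _; hg := fun _ => gone G |}.

Definition FIext n m (phi psi : FIHom n m) : Prop :=
  (forall i, hf phi i = hf psi i) /\ (forall i, hg phi i = hg psi i).

Definition plus_f n m (f : 'I_n -> 'I_m) : 'I_n.+1 -> 'I_m.+1 :=
  fun i => match unlift ord_max i with
           | Some j => lift ord_max (f j) | None => ord_max end.

Lemma plus_f_inj n m (f : 'I_n -> 'I_m) : injective f -> injective (plus_f f).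
Proof.
move=> fi i j; rewrite /plus_f.
case: unliftP => [i' ->|->]; case: unliftP => [j' ->|->] //.
- by move/lift_inj/fi => ->.
- by move=> E; have := neq_lift ord_max (f i'); rewrite E eqxx.
- by move=> E; have := neq_lift ord_max (f j'); rewrite -E eqxx.
Qed.

Definition plus_g n (g : 'I_n -> G) : 'I_n.+1 -> G :=
  fun i => match unlift ord_max i with Some j => g j | None => gone G end.

Definition FIplus n m (phi : FIHom n m) : FIHom n.+1 m.+1 :=
  {| hf := plus_f (hf phi); hinj := plus_f_inj (@hinj _ _ phi);
     hg := plus_g (hg phi) |}.

Definition FIiota n : FIHom n n.+1 :=
  {| hf := lift ord_max; hinj := @lift_inj _ ord_max; hg := fun _ => gone G |}.

Record RMod := {
  rc :> Type;
  req : rc -> rc -> Prop;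
  r0 : rc;
  radd : rc -> rc -> rc;
  ropp : rc -> rc;
  rscal : k -> rc -> rc }.

Definition ModAx (M : RMod) : Prop :=
  (((forall x : M, req x x)) /\ ((forall x y : M, req x y -> req y x)) /\ ((forall x y z : M, req x y -> req y z -> req x z)) /\ ((forall x x' y y' : M, req x x' -> req y y' -> req (radd x y) (radd x' y'))) /\ ((forall x x' : M, req x x' -> req (ropp x) (ropp x'))) /\ ((forall c (x x' : M), req x x' -> req (rscal c x) (rscal c x'))) /\ ((forall x y z : M, req (radd x (radd y z)) (radd (radd x y) z))) /\ ((forall x y : M, req (radd x y) (radd y x))) /\ ((forall x : M, req (radd (r0 M) x) x)) /\ ((forall x : M, req (radd (ropp x) x) (r0 M))) /\ ((forall c (x y : M), req (rscal c (radd x y)) (radd (rscal c x) (rscal c y)))) /\ ((forall c d (x : M), req (rscal (c + d) x) (radd (rscal c x) (rscal d x)))) /\ ((forall c d (x : M), req (rscal (c * d) x) (rscal c (rscal d x)))) /\ ((forall x : M, req (rscal 1 x) x))).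

Definition LinAx (M N : RMod) (f : M -> N) : Prop :=
  (((forall x x' : M, req x x' -> req (f x) (f x'))) /\ ((forall x y : M, req (f (radd x y)) (radd (f x) (f y)))) /\ ((forall c (x : M), req (f (rscal c x)) (rscal c (f x))))).

Definition quotIm (M N : RMod) (f : N -> M) : RMod :=
  {| rc := M;
     req := fun x y => exists z, req (radd x (ropp y)) (f z);
     r0 := r0 M; radd := @radd M; ropp := @ropp M; rscal := @rscal M |}.

Record RFI := {
  fv : nat -> RMod;
  fact : forall n m, FIHom n m -> fv n -> fv m }.
Arguments fact r {n m}.

Definition FIAx (V : RFI) : Prop :=
  (((forall n, ModAx (fv V n))) /\ ((forall n m (phi : FIHom n m), LinAx (fact V phi))) /\ ((forall n (x : fv V n), req (fact V (FIid n) x) x)) /\ ((forall n m l (phi : FIHom n m) (psi : FIHom l n) (x : fv V l),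
          req (fact V (FIcomp phi psi) x) (fact V phi (fact V psi x)))) /\ ((forall n m (phi psi : FIHom n m) (x : fv V n),
          FIext phi psi -> req (fact V phi x) (fact V psi x)))).

Definition RHom (V W : RFI) := forall n, fv V n -> fv W n.

Definition IsHom V W (eta : RHom V W) : Prop :=
  (forall n, LinAx (eta n)) /\
  (forall n m (phi : FIHom n m) (x : fv V n),
      req (eta m (fact V phi x)) (fact W phi (eta n x))).

Definition Surj V W (eta : RHom V W) : Prop :=
  forall n (y : fv W n), exists x, req (eta n x) y.

Definition ExactAt U V W (theta : RHom U V) (eta : RHom V W) : Prop :=
  forall n (x : fv V n), req (eta n x) (r0 (fv W n)) <-> exists y, req (theta n y) x.

Definition Projective (P : RFI) : Prop :=
  forall (V W : RFI), FIAx V -> FIAx W ->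
  forall p : RHom W V, IsHom p -> Surj p ->
  forall u : RHom P V, IsHom u ->
  exists u' : RHom P W, IsHom u' /\ forall n x, req (p n (u' n x)) (u n x).

Definition FIshift (V : RFI) : RFI :=
  {| fv := fun n => fv V n.+1;
     fact := fun n m phi => fact V (FIplus phi) |}.

Definition FIiotaV (V : RFI) : RHom V (FIshift V) :=
  fun n => fact V (FIiota n).

Definition FID (V : RFI) : RFI :=
  {| fv := fun n => quotIm (@FIiotaV V n);
     fact := fun n m phi => fact V (FIplus phi) |}.

Definition FIDmap V W (eta : RHom V W) : RHom (FID V) (FID W) :=
  fun n => eta n.+1.

Fixpoint FIDiter (a : nat) (V : RFI) : RFI :=
  match a with 0 => V | a'.+1 => FID (FIDiter a' V) end.

Fixpoint FIDiterMap (a : nat) V W (eta : RHom V W) : RHom (FIDiter a V) (FIDiter a W) :=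
  match a return RHom (FIDiter a V) (FIDiter a W) with
  | 0 => eta
  | a'.+1 => FIDmap (@FIDiterMap a' V W eta) end.

Definition IsProjRes (V : RFI) (P : nat -> RFI) (d : forall i, RHom (P i.+1) (P i))
  (eps : RHom (P 0) V) : Prop :=
  (((forall i, FIAx (P i))) /\ ((forall i, Projective (P i))) /\ ((forall i, IsHom (d i))) /\ (IsHom eps) /\ (Surj eps) /\ (ExactAt (d 0) eps) /\ ((forall i, ExactAt (d i.+1) (d i)))).

(* H_{j+1}(C) vanishes in degree n *)
Definition HZeroS (C : nat -> RFI) (d : forall i, RHom (C i.+1) (C i)) (j n : nat) : Prop :=
  forall x : fv (C j.+1) n, req (d j n x) (r0 (fv (C j) n)) ->
  exists y : fv (C j.+2) n, req (d j.+1 n y) x.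

(* deg H_i^{D^a}(V) <= e, computed from the projective resolution (P,d) of V
   (meaningful for i >= 1): H_i(D^a P_.) vanishes in every degree n > e *)
Definition HDdegLe (P : nat -> RFI) (d : forall i, RHom (P i.+1) (P i))
  (a i : nat) (e : ExtZ) : Prop :=
  forall n, ext_lt_nat e n ->
  @HZeroS (fun j => FIDiter a (P j)) (fun j => @FIDiterMap a _ _ (d j)) i.-1 n.

(* w = dwidth(V) = sup_{a >= 1} (deg H_1^{D^a}(V) + a) in Z u {+-oo} *)
Definition IsDwidth (P : nat -> RFI) (d : forall i, RHom (P i.+1) (P i)) (w : ExtZ) : Prop :=
  (forall a, (1 <= a)%N -> @HDdegLe P d a 1 (eaddz w (- a%:Z))) /\
  (forall w', (forall a, (1 <= a)%N -> @HDdegLe P d a 1 (eaddz w' (- a%:Z))) -> ele w w').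

Section FreeSum.
Variables (I : Type) (ni : I -> nat).
Definition FSel (m : nat) := (k * {i : I & FIHom (ni i) m})%type.

Inductive fseq (m : nat) : seq (FSel m) -> seq (FSel m) -> Prop :=
| fs_refl l : fseq l l
| fs_sym l l' : fseq l l' -> fseq l' l
| fs_trans l1 l2 l3 : fseq l1 l2 -> fseq l2 l3 -> fseq l1 l3
| fs_cat l1 l2 l1' l2' : fseq l1 l1' -> fseq l2 l2' -> fseq (l1 ++ l2) (l1' ++ l2')
| fs_swap x y : fseq [:: x; y] [:: y; x]
| fs_merge c1 c2 t : fseq [:: (c1, t); (c2, t)] [:: (c1 + c2, t)]
| fs_zero t : fseq [:: (0, t)] [::]
| fs_ext c i (phi psi : FIHom (ni i) m) :
    FIext phi psi -> fseq [:: (c, existT _ i phi)] [:: (c, existT _ i psi)].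

Definition FreeMod (m : nat) : RMod :=
  {| rc := seq (FSel m); req := @fseq m; r0 := [::]; radd := fun l l' => l ++ l';
     ropp := map (fun x => (- x.1, x.2));
     rscal := fun c => map (fun x => (c * x.1, x.2)) |}.

Definition FreeSum : RFI :=
  {| fv := FreeMod;
     fact := fun n m phi =>
       map (fun x : FSel n => (x.1, existT _ (tag x.2) (FIcomp phi (tagged x.2)))) |}.
End FreeSum.

Definition GenLe (V : RFI) (r : nat) : Prop :=
  exists (I : Type) (ni : I -> nat), (forall i, (ni i <= r)%N) /\
  exists p : RHom (FreeSum ni) V, IsHom p /\ Surj p.

(* G_n = S_n wr G = Aut_{FI_G}([n]) = FIHom n n (injective self-maps of [n]) *)
Record RGMod (n : nat) := { gm :> RMod; gact : FIHom n n -> gm -> gm }.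
Arguments gact {n} r.

Definition GModAx n (W : RGMod n) : Prop :=
  ((ModAx W) /\ ((forall s, LinAx (gact W s))) /\ ((forall x, req (gact W (FIid n) x) x)) /\ ((forall s t x, req (gact W (FIcomp s t) x) (gact W s (gact W t x)))) /\ ((forall s t x, FIext s t -> req (gact W s x) (gact W t x)))).

Section RelProj.
Variables (I : Type) (ni : I -> nat) (W : forall i, RGMod (ni i)).
Definition PSel (m : nat) := {i : I & (W i * FIHom (ni i) m)%type}.

(* M(W)_m = W (x)_{k[G_n]} k[Hom(n,m)], summed over i *)
Inductive pseq (m : nat) : seq (PSel m) -> seq (PSel m) -> Prop :=
| ps_refl l : pseq l l
| ps_sym l l' : pseq l l' -> pseq l' l
| ps_trans l1 l2 l3 : pseq l1 l2 -> pseq l2 l3 -> pseq l1 l3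
| ps_cat l1 l2 l1' l2' : pseq l1 l1' -> pseq l2 l2' -> pseq (l1 ++ l2) (l1' ++ l2')
| ps_swap x y : pseq [:: x; y] [:: y; x]
| ps_add i w1 w2 phi :
    pseq [:: existT _ i (w1, phi); existT _ i (w2, phi)] [:: existT _ i (radd w1 w2, phi)]
| ps_zero i phi : pseq [:: existT _ i (r0 (W i), phi)] [::]
| ps_eqv i w w' phi : req w w' -> pseq [:: existT _ i (w, phi)] [:: existT _ i (w', phi)]
| ps_ext i w (phi psi : FIHom (ni i) m) :
    FIext phi psi -> pseq [:: existT _ i (w, phi)] [:: existT _ i (w, psi)]
| ps_bal i (s : FIHom (ni i) (ni i)) w phi :
    pseq [:: existT _ i (gact (W i) s w, phi)] [:: existT _ i (w, FIcomp phi s)].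

Definition PMod (m : nat) : RMod :=
  {| rc := seq (PSel m); req := @pseq m; r0 := [::]; radd := fun l l' => l ++ l';
     ropp := map (fun x => existT _ (tag x) (ropp (tagged x).1, (tagged x).2));
     rscal := fun c => map (fun x => existT _ (tag x) (rscal c (tagged x).1, (tagged x).2)) |}.

Definition PSum : RFI :=
  {| fv := PMod;
     fact := fun n m phi =>
       map (fun x : PSel n => existT _ (tag x) ((tagged x).1, FIcomp phi (tagged x).2)) |}.
End RelProj.

Definition RelLe (V : RFI) (r : nat) : Prop :=
  exists (I : Type) (ni : I -> nat) (W : forall i, RGMod (ni i)),
  (forall i, GModAx (W i)) /\
  exists (K : RFI) (iK : RHom K (PSum W)) (pi : RHom (PSum W) V),
  ((FIAx K) /\ (GenLe K r) /\ (IsHom iK) /\ (IsHom pi) /\ ((forall n (x : fv K n), req (iK n x) (r0 _) -> req x (r0 _))) /\ (Surj pi) /\ (ExactAt iK pi)).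

Definition PresentedFinite (V : RFI) : Prop :=
  exists m r, GenLe V m /\ RelLe V r.

End FIG.

(* Main.v *)
Require Import Defs.
From mathcomp Require Import all_boot all_order all_algebra zify.
From Stdlib Require Import Classical ClassicalEpsilon FunctionalExtensionality ProofIrrelevance Eqdep.
Set Implicit Arguments. Unset Strict Implicit. Unset Printing Implicit Defensive.
Import GRing.Theory.
Local Open Scope ring_scope.

Section ModLemmas.
Variables (k : comPzRingType) (M : RMod k).
Hypothesis HM : ModAx M.
Local Notation "x ~ y" := (@req k M x y) (at level 70).
Local Notation "x + y" := (@radd k M x y).
Local Notation "- x" := (@ropp k M x).
Local Notation "0" := (r0 M).

Lemma mrefl x : x ~ x. Proof. by move: HM => [h [_ [_ [_ [_ [_ [_ [_ [_ [_ [_ [_ [_ _]]]]]]]]]]]]]; apply: h. Qed.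
Lemma msym x y : x ~ y -> y ~ x. Proof. by move: HM => [_ [h [_ [_ [_ [_ [_ [_ [_ [_ [_ [_ [_ _]]]]]]]]]]]]]; apply: h. Qed.
Lemma mtrans x y z : x ~ y -> y ~ z -> x ~ z. Proof. by move: HM => [_ [_ [h [_ [_ [_ [_ [_ [_ [_ [_ [_ [_ _]]]]]]]]]]]]]; apply: h. Qed.
Lemma maddC' x x' y y' : x ~ x' -> y ~ y' -> x + y ~ x' + y'. Proof. by move: HM => [_ [_ [_ [h [_ [_ [_ [_ [_ [_ [_ [_ [_ _]]]]]]]]]]]]]; apply: h. Qed.
Lemma moppC x x' : x ~ x' -> - x ~ - x'. Proof. by move: HM => [_ [_ [_ [_ [h [_ [_ [_ [_ [_ [_ [_ [_ _]]]]]]]]]]]]]; apply: h. Qed.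
Lemma mscalC c x x' : x ~ x' -> rscal c x ~ rscal c x'. Proof. by move: HM => [_ [_ [_ [_ [_ [h [_ [_ [_ [_ [_ [_ [_ _]]]]]]]]]]]]]; apply: h. Qed.
Lemma maddA x y z : x + (y + z) ~ (x + y) + z. Proof. by move: HM => [_ [_ [_ [_ [_ [_ [h [_ [_ [_ [_ [_ [_ _]]]]]]]]]]]]]; apply: h. Qed.
Lemma maddC x y : x + y ~ y + x. Proof. by move: HM => [_ [_ [_ [_ [_ [_ [_ [h [_ [_ [_ [_ [_ _]]]]]]]]]]]]]; apply: h. Qed.
Lemma madd0 x : 0 + x ~ x. Proof. by move: HM => [_ [_ [_ [_ [_ [_ [_ [_ [h [_ [_ [_ [_ _]]]]]]]]]]]]]; apply: h. Qed.
Lemma maddN x : (- x) + x ~ 0. Proof. by move: HM => [_ [_ [_ [_ [_ [_ [_ [_ [_ [h [_ [_ [_ _]]]]]]]]]]]]]; apply: h. Qed.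
Lemma mscalD c x y : rscal c (x + y) ~ rscal c x + rscal c y.
Proof. by move: HM => [_ [_ [_ [_ [_ [_ [_ [_ [_ [_ [h [_ [_ _]]]]]]]]]]]]]; apply: h. Qed.
Lemma mscalDk c d x : rscal (c + d)%R x ~ rscal c x + rscal d x.
Proof. by move: HM => [_ [_ [_ [_ [_ [_ [_ [_ [_ [_ [_ [h [_ _]]]]]]]]]]]]]; apply: h. Qed.
Lemma mscalM c d x : rscal (c * d) x ~ rscal c (rscal d x).
Proof. by move: HM => [_ [_ [_ [_ [_ [_ [_ [_ [_ [_ [_ [_ [h _]]]]]]]]]]]]]; apply: h. Qed.
Lemma mscal1 x : rscal 1 x ~ x.
Proof. by move: HM => [_ [_ [_ [_ [_ [_ [_ [_ [_ [_ [_ [_ [_ h]]]]]]]]]]]]]; apply: h. Qed.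

Lemma maddl x y y' : y ~ y' -> x + y ~ x + y'. Proof. by move=> h; apply: maddC' => //; apply: mrefl. Qed.
Lemma maddr x x' y : x ~ x' -> x + y ~ x' + y. Proof. by move=> h; apply: maddC' => //; apply: mrefl. Qed.
Lemma madd0r x : x + 0 ~ x. Proof. exact: mtrans (maddC _ _) (madd0 _). Qed.
Lemma maddNr x : x + (- x) ~ 0. Proof. exact: mtrans (maddC _ _) (maddN _). Qed.
Lemma mcancel a x y : a + x ~ a + y -> x ~ y.
Proof.
move=> h.
have e1 : (- a) + (a + x) ~ x.
  apply: mtrans (maddA _ _ _) _; apply: mtrans (maddr _ (maddN _)) _; exact: madd0.
have e2 : (- a) + (a + y) ~ y.
  apply: mtrans (maddA _ _ _) _; apply: mtrans (maddr _ (maddN _)) _; exact: madd0.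
apply: mtrans (msym e1) _; apply: mtrans _ e2; exact: maddl.
Qed.
Lemma msub0 x y : x + (- y) ~ 0 -> x ~ y.
Proof.
move=> h; apply: (@mcancel (- y)).
apply: mtrans (maddC _ _) _; apply: mtrans h _; exact: msym (maddN _).
Qed.
Lemma msubr x y : x ~ y -> x + (- y) ~ 0.
Proof. move=> h; apply: mtrans (maddr _ h) _; exact: maddNr. Qed.
Lemma mscal0 x : rscal 0%R x ~ 0.
Proof.
have h : rscal 0%R x + rscal 0%R x ~ rscal 0%R x + 0.
  apply: mtrans (msym (mscalDk _ _ _)) _; rewrite addr0; exact: msym (madd0r _).
exact: mcancel h.
Qed.
Lemma mopp0 : - 0 ~ 0. Proof. apply: mtrans (msym (madd0r _)) _; exact: maddN. Qed.
Lemma mscalr0 c : rscal c 0 ~ 0.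
Proof.
have h : rscal c 0 + rscal c 0 ~ rscal c 0 + 0.
  apply: mtrans (msym (mscalD _ _ _)) _; apply: mtrans _ (msym (madd0r _)).
  apply: mscalC; exact: madd0.
exact: mcancel h.
Qed.
Lemma moppE x y : x + y ~ 0 -> - x ~ y.
Proof. move=> h; apply: (@mcancel x); apply: mtrans (maddNr _) _; exact: msym h. Qed.
Lemma mscalN c x : rscal (- c) x ~ - rscal c x.
Proof.
apply: msym; apply: moppE; apply: mtrans (msym (mscalDk _ _ _)) _.
rewrite subrr; exact: mscal0.
Qed.
Lemma moppD x y : - (x + y) ~ (- x) + (- y).
Proof.
apply: moppE.
apply: mtrans (maddA _ _ _) _. apply: mtrans (maddr _ (maddr _ (maddC _ _))) _.
apply: mtrans (maddr _ (msym (maddA _ _ _))) _.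
apply: mtrans (maddr _ (maddl _ (maddNr _))) _.
apply: mtrans (maddr _ (madd0r _)) _. exact: maddNr.
Qed.
Lemma moppK x : - (- x) ~ x. Proof. apply: moppE; exact: maddN. Qed.
Lemma maddAC x y z w : (x + y) + (z + w) ~ (x + z) + (y + w).
Proof.
apply: mtrans (msym (maddA _ _ _)) _. apply: mtrans _ (maddA _ _ _).
apply: maddl. apply: mtrans (maddA _ _ _) _. apply: mtrans (maddr _ (maddC _ _)) _.
exact: msym (maddA _ _ _).
Qed.
Lemma msubtrans x y z : (x + - y) + (y + - z) ~ x + - z.
Proof.
apply: mtrans (msym (maddA _ _ _)) _. apply: maddl.
apply: mtrans (maddA _ _ _) _. apply: mtrans (maddr _ (maddN _)) _. exact: madd0.
Qed.
End ModLemmas.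

Section LinLemmas.
Variables (k : comPzRingType) (M N : RMod k) (f : M -> N).
Hypotheses (HM : ModAx M) (HN : ModAx N) (Hf : LinAx f).
Lemma lin_cong x y : req x y -> req (f x) (f y). Proof. by move: Hf => [h [_ _]]; apply: h. Qed.
Lemma lin_add x y : req (f (radd x y)) (radd (f x) (f y)). Proof. by move: Hf => [_ [h _]]; apply: h. Qed.
Lemma lin_scal c x : req (f (rscal c x)) (rscal c (f x)). Proof. by move: Hf => [_ [_ h]]; apply: h. Qed.
Lemma lin0 : req (f (r0 M)) (r0 N).
Proof.
apply (@mcancel _ _ HN (f (r0 M))).
apply (mtrans HN (msym HN (lin_add (r0 M) (r0 M)))).
apply (mtrans HN (lin_cong (madd0 HM (r0 M)))). exact (msym HN (madd0r HN _)).
Qed.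
Lemma lin_opp x : req (f (ropp x)) (ropp (f x)).
Proof.
apply (msym HN); apply (moppE HN).
apply (mtrans HN (msym HN (lin_add x (ropp x)))).
apply (mtrans HN (lin_cong (maddNr HM x))). exact lin0.
Qed.
Lemma lin_sub x y : req (f (radd x (ropp y))) (radd (f x) (ropp (f y))).
Proof. apply (mtrans HN (lin_add x (ropp y))). apply (maddl HN). exact (lin_opp y). Qed.
End LinLemmas.

Section FIHomLemmas.
Variable G : AbsGroup.

Lemma FIext_eq n m (phi psi : FIHom G n m) : FIext phi psi -> phi = psi.
Proof.
case: phi psi => f1 i1 g1 [f2 i2 g2] [/= Hf Hg].
have ef : f1 = f2 by apply: functional_extensionality.
subst f2.
have eg : g1 = g2 by apply: functional_extensionality.
subst g2. by rewrite (proof_irrelevance _ i1 i2).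
Qed.

Lemma FIcompA n m l p (phi : FIHom G m l) (psi : FIHom G n m) (chi : FIHom G p n) :
  FIcomp phi (FIcomp psi chi) = FIcomp (FIcomp phi psi) chi.
Proof. apply: FIext_eq; split => i //=. by rewrite gmulA. Qed.

Lemma FIcomp1 n m (phi : FIHom G n m) : FIcomp (FIid G m) phi = phi.
Proof. apply: FIext_eq; split => i //=. by rewrite gmulg1. Qed.

Lemma FIcompid n m (phi : FIHom G n m) : FIcomp phi (FIid G n) = phi.
Proof. apply: FIext_eq; split => i //=. by rewrite gmul1. Qed.

Lemma gmul_canc (x y z : G) : gmul x z = gmul y z -> x = y.
Proof.
move=> h. have := congr1 (fun t => gmul t (ginv z)) h => /=.
by rewrite -!gmulA gmulgV !gmulg1.
Qed.

Lemma FIcomp_inj n m l (phi : FIHom G m l) (s s' : FIHom G n m) :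
  FIcomp phi s = FIcomp phi s' -> s = s'.
Proof.
move=> h.
have hf1 : forall i, hf s i = hf s' i.
  move=> i; apply: (@hinj _ _ _ phi). by have := congr1 (fun t => hf t i) h.
apply: FIext_eq; split => // i.
have := congr1 (fun t => hg t i) h => /=. rewrite hf1. exact: gmul_canc.
Qed.

Lemma FIplus_comp n m l (phi : FIHom G m l) (psi : FIHom G n m) :
  FIplus (FIcomp phi psi) = FIcomp (FIplus phi) (FIplus psi).
Proof.
apply: FIext_eq; split => i /=; rewrite /plus_f /plus_g /=;
 case: (unliftP ord_max i) => [j _|_] /=; rewrite ?liftK ?unlift_none /= ?gmul1 ?gmulg1 //.
Qed.

Lemma FIplus_id n : FIplus (FIid G n) = FIid G n.+1.
Proof.
apply: FIext_eq; split => i /=; rewrite /plus_f /plus_g /=;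
 case: (unliftP ord_max i) => [j e|e]; rewrite ?e //.
Qed.

Lemma FIplus_iota n m (phi : FIHom G n m) :
  FIcomp (FIplus phi) (FIiota G n) = FIcomp (FIiota G m) phi.
Proof.
apply: FIext_eq; split => i /=; rewrite /plus_f /plus_g /= liftK //.
by rewrite gmul1 gmulg1.
Qed.

Lemma FIplus_ext n m (phi psi : FIHom G n m) : FIext phi psi -> FIext (FIplus phi) (FIplus psi).
Proof. by move/FIext_eq => ->; split. Qed.
End FIHomLemmas.

Section FIAxLemmas.
Variables (k : comPzRingType) (G : AbsGroup) (V : RFI k G).
Hypothesis HV : FIAx V.
Lemma FIA_mod n : ModAx (fv V n). Proof. by move: HV => [h _]. Qed.
Lemma FIA_lin n m (phi : FIHom G n m) : LinAx (fact (r:=V) phi). Proof. by move: HV => [_ [h _]]. Qed.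
Lemma FIA_id n (x : fv V n) : req (fact (r:=V) (FIid G n) x) x. Proof. by move: HV => [_ [_ [h _]]]. Qed.
Lemma FIA_comp n m l (phi : FIHom G n m) (psi : FIHom G l n) (x : fv V l) :
  req (fact (r:=V) (FIcomp phi psi) x) (fact (r:=V) phi (fact (r:=V) psi x)). Proof. by move: HV => [_ [_ [_ [h _]]]]. Qed.
Lemma FIA_ext n m (phi psi : FIHom G n m) (x : fv V n) :
  FIext phi psi -> req (fact (r:=V) phi x) (fact (r:=V) psi x). Proof. by move: HV => [_ [_ [_ [_ h]]]]; apply: h. Qed.
End FIAxLemmas.

Definition pb (Q : Prop) : bool := if excluded_middle_informative Q then true else false.
Lemma pbP (Q : Prop) : reflect Q (pb Q).
Proof. rewrite /pb; case: excluded_middle_informative => h; by constructor. Qed.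
Lemma pb_eq (Q Q' : Prop) : (Q <-> Q') -> pb Q = pb Q'.
Proof. move=> h; apply/idP/idP => /pbP q; apply/pbP; tauto. Qed.

Section FreeW.
Variables (k : comPzRingType) (G : AbsGroup) (P : RFI k G).

Definition E m := {j : {p : nat & fv P p} & FIHom G (projT1 j) m}.
Definition coef m (e : E m) (l : seq (k * E m)) : k := \sum_(x <- l | pb (x.2 = e)) x.1.
Definition WMod m : RMod k :=
  {| rc := seq (k * E m); req := fun l l' => forall e, coef e l = coef e l'; r0 := [::];
     radd := fun l l' => l ++ l'; ropp := map (fun x => (- x.1, x.2));
     rscal := fun c => map (fun x => (c * x.1, x.2)) |}.
Definition bact n m (phi : FIHom G n m) (e : E n) : E m := existT _ (tag e) (FIcomp phi (tagged e)).
Definition W : RFI k G := {| fv := WMod; fact := fun n m phi => map (fun x => (x.1, bact phi x.2)) |}.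

Lemma coef_nil m (e : E m) : coef e [::] = 0. Proof. by rewrite /coef big_nil. Qed.
Lemma coef_cat m (e : E m) l l' : coef e (l ++ l') = coef e l + coef e l'.
Proof. by rewrite /coef big_cat. Qed.
Lemma coef_opp m (e : E m) l : coef e (map (fun x => (- x.1, x.2)) l) = - coef e l.
Proof. by rewrite /coef big_map /= sumrN. Qed.
Lemma coef_scal m (e : E m) c l : coef e (map (fun x => (c * x.1, x.2)) l) = c * coef e l.
Proof. by rewrite /coef big_map /= mulr_sumr. Qed.
Lemma coef_cons m (e : E m) x l : coef e (x :: l) = (if pb (x.2 = e) then x.1 else 0) + coef e l.
Proof. by rewrite /coef big_cons; case: ifP; rewrite ?add0r. Qed.

Lemma bact_inj n m (phi : FIHom G n m) e1 e2 : bact phi e1 = bact phi e2 -> e1 = e2.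
Proof.
case: e1 e2 => [j1 s1] [j2 s2] h.
have ej : j1 = j2 by have := congr1 (@projT1 _ _) h.
subst j2. have := Eqdep.EqdepTheory.inj_pair2 _ _ _ _ _ h => /= /FIcomp_inj e. by rewrite e.
Qed.

Lemma coef_act n m (phi : FIHom G n m) e l :
  coef (bact phi e) (map (fun x => (x.1, bact phi x.2)) l) = coef e l.
Proof.
rewrite /coef big_map /=; apply: eq_bigl => x; apply: pb_eq; split; last by move=> ->.
exact: bact_inj.
Qed.

Lemma coef_act0 n m (phi : FIHom G n m) e l :
  ~ (exists e', bact phi e' = e) -> coef e (map (fun x => (x.1, bact phi x.2)) l) = 0.
Proof.
move=> h; rewrite /coef big_map /= big1 // => x /pbP hx. by case: h; exists x.2.
Qed.

Lemma W_ModAx m : ModAx (WMod m).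
Proof.
rewrite /ModAx /=; do !split => /=.
- by [].
- by move=> x y z h1 h2 e; rewrite (h1 e) (h2 e).
- by move=> x x' y y' h1 h2 e; rewrite !coef_cat (h1 e) (h2 e).
- by move=> x x' h e; rewrite !coef_opp (h e).
- by move=> c x x' h e; rewrite !coef_scal (h e).
- by move=> x y z e; rewrite catA.
- by move=> x y e; rewrite !coef_cat addrC.
- by move=> x e; rewrite coef_cat coef_opp coef_nil addNr.
- by move=> c x y e; rewrite map_cat.
- by move=> c d x e; rewrite coef_cat !coef_scal mulrDl.
- by move=> c d x e; rewrite !coef_scal mulrA.
- by move=> x e; rewrite coef_scal mul1r.
Qed.

Lemma bact_id n (e : E n) : bact (FIid G n) e = e.
Proof. by rewrite /bact FIcomp1; case: e. Qed.
Lemma bact_comp n m l (phi : FIHom G m l) (psi : FIHom G n m) e :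
  bact (FIcomp phi psi) e = bact phi (bact psi e).
Proof. by rewrite /bact /= FIcompA. Qed.

Lemma W_FIAx : FIAx W.
Proof.
rewrite /FIAx; split; first exact: W_ModAx.
split.
  move=> n m phi; rewrite /LinAx /=; split; last split.
  - move=> x x' h e.
    case: (classic (exists e', bact phi e' = e)) => [[e' <-]|ne].
      by rewrite !coef_act (h e').
    by rewrite !coef_act0.
  - by move=> x y e; rewrite map_cat.
  - by move=> c x e; rewrite -!map_comp.
split.
  move=> n x e /=. rewrite (@eq_map _ _ _ id) ?map_id // => -[c e'] /=. by rewrite bact_id.
split.
  move=> n m l phi psi x e /=. rewrite -map_comp. congr coef; apply: eq_map => -[c e'] /=.
  by rewrite bact_comp.
by move=> n m phi psi x /FIext_eq ->.
Qed.
End FreeW.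

Section PMap.
Variables (k : comPzRingType) (G : AbsGroup) (P : RFI k G).
Hypothesis HP : FIAx P.
Local Notation HM n := (FIA_mod HP n).

Definition vE m (e : E P m) : fv P m := fact (r:=P) (tagged e) (projT2 (tag e)).
Definition pel m (x : k * E P m) : fv P m := rscal x.1 (vE x.2).
Definition pmap m (l : seq (k * E P m)) : fv P m := foldr (fun x acc => radd (pel x) acc) (r0 _) l.

Lemma pmap_cat m (l l' : seq (k * E P m)) : req (pmap (l ++ l')) (radd (pmap l) (pmap l')).
Proof.
elim: l => [|x l IH] /=; first exact (msym (HM m) (madd0 (HM m) _)).
apply (mtrans (HM m) (maddl (HM m) _ IH)). exact (maddA (HM m) _ _ _).
Qed.

Lemma pmap_filter m q (l : seq (k * E P m)) :
  req (pmap l) (radd (pmap (filter q l)) (pmap (filter (predC q) l))).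
Proof.
elim: l => [|x l IH] /=; first exact (msym (HM m) (madd0 (HM m) _)).
case: (q x) => /=.
  apply (mtrans (HM m) (maddl (HM m) _ IH)). exact (maddA (HM m) _ _ _).
apply (mtrans (HM m) (maddl (HM m) _ IH)).
apply (mtrans (HM m) (maddA (HM m) _ _ _)).
apply (mtrans (HM m) (maddr (HM m) _ (maddC (HM m) _ _))).
exact (msym (HM m) (maddA (HM m) _ _ _)).
Qed.

Lemma pmap_same m (e : E P m) (l : seq (k * E P m)) :
  all (fun y => pb (y.2 = e)) l -> req (pmap l) (rscal (\sum_(y <- l) y.1) (vE e)).
Proof.
elim: l => [|x l IH] /=.
  rewrite big_nil => _. exact (msym (HM m) (mscal0 (HM m) _)).
move=> /andP [/pbP hx hl].
rewrite big_cons.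
apply (mtrans (HM m) (maddl (HM m) _ (IH hl))).
rewrite /pel hx.
exact (msym (HM m) (mscalDk (HM m) _ _ _)).
Qed.

Lemma pmap_zero m (L : seq (k * E P m)) : (forall e, coef e L = 0) -> req (pmap L) (r0 _).
Proof.
move=> hc0; have [N hN] := ubnP (size L).
elim: N L hN hc0 => [|N IH] [|x L'] //= hs hc; try exact (mrefl (HM m) _).
set q := fun y : k * E P m => pb (y.2 = x.2).
apply (mtrans (HM m) (maddl (HM m) _ (pmap_filter q L'))).
apply (mtrans (HM m) (maddA (HM m) _ _ _)).
refine (mtrans (HM m) _ (madd0 (HM m) (r0 _))).
apply: maddC' (HM m) _ _ _ _ _ _.
- apply (mtrans (HM m) (maddl (HM m) _ (@pmap_same m x.2 _ (filter_all q L')))).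
  refine (mtrans (HM m) (msym (HM m) (mscalDk (HM m) x.1 _ (vE x.2))) _).
  have -> : x.1 + \sum_(y <- filter q L') y.1 = 0.
    have := hc x.2; rewrite coef_cons.
    have -> : pb (x.2 = x.2) by apply/pbP.
    by rewrite /coef big_filter.
  exact (mscal0 (HM m) _).
- apply: IH; first by rewrite size_filter (leq_ltn_trans (count_size _ _)).
  move=> e; rewrite /coef big_filter_cond.
  case: (classic (e = x.2)) => [->|ne].
    rewrite big1 // => y /andP [/= /pbP ny /pbP ey]. by case: ny.
  have := hc e; rewrite coef_cons.
  have -> : pb (x.2 = e) = false by apply/pbP => h; apply: ne.
  rewrite add0r => h; rewrite -[RHS]h /coef; apply: eq_bigl => y /=.
  case: (pbP (y.2 = e)) => [ey|]; last by rewrite andbF.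
  rewrite andbT; apply/negP => /pbP h2; apply: ne; by rewrite -ey.
Qed.

Lemma pmap_opp m (l : seq (k * E P m)) :
  req (pmap (map (fun x => (- x.1, x.2)) l)) (ropp (pmap l)).
Proof.
elim: l => [|x l IH] /=; first exact (msym (HM m) (mopp0 (HM m))).
refine (mtrans (HM m) (maddC' (HM m) (mscalN (HM m) _ _) IH) _).
exact (msym (HM m) (moppD (HM m) _ _)).
Qed.


Lemma pmap_resp m (l l' : seq (k * E P m)) :
  (forall e, coef e l = coef e l') -> req (pmap l) (pmap l').
Proof.
move=> h; apply (msub0 (HM m)).
have hz : req (pmap (l ++ map (fun x => (- x.1, x.2)) l')) (r0 _).
  apply: pmap_zero => e. by rewrite coef_cat coef_opp h subrr.
refine (mtrans (HM m) _ hz).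
refine (mtrans (HM m) _ (msym (HM m) (pmap_cat _ _))).
exact (maddl (HM m) _ (msym (HM m) (pmap_opp _))).
Qed.

Lemma pmap_scal m c (l : seq (k * E P m)) :
  req (pmap (map (fun x => (c * x.1, x.2)) l)) (rscal c (pmap l)).
Proof.
elim: l => [|x l IH] /=; first exact (msym (HM m) (mscalr0 (HM m) _)).
refine (mtrans (HM m) (maddC' (HM m) (mscalM (HM m) _ _ _) IH) _).
exact (msym (HM m) (mscalD (HM m) _ _ _)).
Qed.

Lemma pmap_nat n m (phi : FIHom G n m) (l : seq (k * E P n)) :
  req (pmap (fact (r:=W P) phi l)) (fact (r:=P) phi (pmap l)).
Proof.
have HL := FIA_lin HP phi.
elim: l => [|x l IH] /=; first exact (msym (HM m) (lin0 (HM n) (HM m) HL)).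
refine (mtrans (HM m) _ (msym (HM m) (lin_add HL _ _))).
apply (maddC' (HM m)); last exact IH.
rewrite /pel /vE /=.
refine (mtrans (HM m) _ (msym (HM m) (lin_scal HL _ _))).
apply (mscalC (HM m)). exact (FIA_comp HP _ _ _).
Qed.

Lemma pmap_IsHom : IsHom (k:=k) (G:=G) (V:=W P) (W:=P) pmap.
Proof.
split.
  move=> n; split; last split.
  - move=> x x' h; exact (pmap_resp h).
  - move=> x y; exact (pmap_cat _ _).
  - move=> c x; exact (pmap_scal _ _).
move=> n m phi x; exact (pmap_nat _ _).
Qed.

Lemma pmap_Surj : Surj (k:=k) (G:=G) (V:=W P) (W:=P) pmap.
Proof.
move=> n y.
exists [:: (1, existT (fun j : {p : nat & fv P p} => FIHom G (projT1 j) n) (existT _ n y) (FIid G n))].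
rewrite /= /pel /vE /=.
refine (mtrans (HM n) (madd0r (HM n) _) _).
refine (mtrans (HM n) (mscal1 (HM n) _) _).
exact (FIA_id HP _).
Qed.
End PMap.

Section DMod.
Variables (k : comPzRingType) (G : AbsGroup) (V : RFI k G).
Hypothesis HV : FIAx V.
Local Notation HM n := (FIA_mod HV n).
Local Notation io n := (fact (r:=V) (FIiota G n)).
Local Notation HL n := (FIA_lin HV (FIiota G n)).

Lemma reqD n (x y : fv V n.+1) : req x y -> @req k (fv (FID V) n) x y.
Proof.
move=> h; exists (r0 _).
refine (mtrans (HM _) (msubr (HM _) h) _).
exact (msym (HM _) (lin0 (HM _) (HM _) (HL n))).
Qed.

Lemma msub_opp (M : RMod k) (HMM : ModAx M) (x y : M) : req (ropp (radd x (ropp y))) (radd y (ropp x)).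
Proof.
refine (mtrans HMM (moppD HMM _ _) _).
refine (mtrans HMM (maddl HMM _ (moppK HMM _)) _).
exact (maddC HMM _ _).
Qed.

Lemma msub_add (M : RMod k) (HMM : ModAx M) (x y x' y' : M) :
  req (radd (radd x y) (ropp (radd x' y'))) (radd (radd x (ropp x')) (radd y (ropp y'))).
Proof.
refine (mtrans HMM (maddl HMM _ (moppD HMM _ _)) _).
exact (maddAC HMM _ _ _ _).
Qed.

Lemma mscal_opp (M : RMod k) (HMM : ModAx M) c (x : M) : req (rscal c (ropp x)) (ropp (rscal c x)).
Proof.
apply (msym HMM); apply (moppE HMM).
refine (mtrans HMM (msym HMM (mscalD HMM _ _ _)) _).
refine (mtrans HMM (mscalC HMM _ (maddNr HMM _)) _).
exact (mscalr0 HMM _).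
Qed.

Lemma D_ModAx n : ModAx (fv (FID V) n).
Proof.
have HN := HM n.+1; have HN0 := HM n.
rewrite /ModAx; split; last split; last split; last split; last split; last split.
- move=> x; apply: reqD; exact (mrefl HN _).
- move=> x y [z hz]; exists (ropp z).
  refine (mtrans HN (msym HN (msub_opp HN _ _)) _).
  refine (mtrans HN (moppC HN hz) _).
  exact (msym HN (lin_opp HN0 HN (HL n) _)).
- move=> x y w [z1 h1] [z2 h2]; exists (radd z1 z2).
  refine (mtrans HN (msym HN (msubtrans HN x y w)) _).
  refine (mtrans HN (maddC' HN h1 h2) _).
  exact (msym HN (lin_add (HL n) _ _)).
- move=> x x' y y' [z1 h1] [z2 h2]; exists (radd z1 z2).
  refine (mtrans HN (msub_add HN _ _ _ _) _).
  refine (mtrans HN (maddC' HN h1 h2) _).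
  exact (msym HN (lin_add (HL n) _ _)).
- move=> x x' [z h]; exists (ropp z).
  refine (mtrans HN (msym HN (moppD HN _ _)) _).
  refine (mtrans HN (moppC HN h) _).
  exact (msym HN (lin_opp HN0 HN (HL n) _)).
- move=> c x x' [z h]; exists (rscal c z).
  refine (mtrans HN (maddl HN _ (msym HN (mscal_opp HN _ _))) _).
  refine (mtrans HN (msym HN (mscalD HN _ _ _)) _).
  refine (mtrans HN (mscalC HN _ h) _).
  exact (msym HN (lin_scal (HL n) _ _)).
split; first by move=> x y z; apply: reqD; exact (maddA HN _ _ _).
split; first by move=> x y; apply: reqD; exact (maddC HN _ _).
split; first by move=> x; apply: reqD; exact (madd0 HN _).
split; first by move=> x; apply: reqD; exact (maddN HN _).
split; first by move=> c x y; apply: reqD; exact (mscalD HN _ _ _).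
split; first by move=> c d x; apply: reqD; exact (mscalDk HN _ _ _).
split; first by move=> c d x; apply: reqD; exact (mscalM HN _ _ _).
by move=> x; apply: reqD; exact (mscal1 HN _).
Qed.

Lemma D_FIAx : FIAx (FID V).
Proof.
split; first exact: D_ModAx.
split.
  move=> n m phi; have HF := FIA_lin HV (FIplus phi).
  split; last split.
  - move=> x x' [z h]; exists (fact (r:=V) phi z).
    refine (mtrans (HM _) (msym (HM _) (lin_sub (HM _) (HM _) HF _ _)) _).
    refine (mtrans (HM _) (lin_cong HF h) _).
    refine (mtrans (HM _) (msym (HM _) (FIA_comp HV _ _ _)) _).
    rewrite FIplus_iota. exact (FIA_comp HV _ _ _).
  - move=> x y; apply: reqD; exact (lin_add HF _ _).
  - move=> c x; apply: reqD; exact (lin_scal HF _ _).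
split.
  move=> n x; apply: reqD => /=; rewrite FIplus_id; exact (FIA_id HV _).
split.
  move=> n m l phi psi x; apply: reqD => /=; rewrite FIplus_comp; exact (FIA_comp HV _ _ _).
move=> n m phi psi x h; apply: reqD => /=; apply: FIA_ext => //; exact: FIplus_ext.
Qed.
End DMod.

Section DHom.
Variables (k : comPzRingType) (G : AbsGroup) (V W : RFI k G).
Hypotheses (HV : FIAx V) (HW : FIAx W).
Variable eta : RHom V W.
Hypothesis Heta : IsHom eta.
Lemma hom_lin (n : nat) : LinAx (@eta n). Proof. by case: Heta. Qed.
Lemma hom_nat n m (phi : FIHom G n m) x : req (@eta m (fact (r:=V) phi x)) (fact (r:=W) phi (@eta n x)).
Proof. by case: Heta => _ h; apply: h. Qed.

Lemma D_IsHom : IsHom (FIDmap eta).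
Proof.
split.
  move=> n; have HE := hom_lin n.+1; split; last split.
  - move=> x x' [z h]; exists (@eta n z).
    refine (mtrans (FIA_mod HW _) (msym (FIA_mod HW _) (lin_sub (FIA_mod HV _) (FIA_mod HW _) HE _ _)) _).
    refine (mtrans (FIA_mod HW _) (lin_cong HE h) _).
    exact (hom_nat _ _).
  - move=> x y; apply: reqD => //; exact (lin_add HE _ _).
  - move=> c x; apply: reqD => //; exact (lin_scal HE _ _).
move=> n m phi x; apply: reqD => //; exact (hom_nat _ _).
Qed.
End DHom.

Lemma Diter_FIAx k G (V : RFI k G) a : FIAx V -> FIAx (FIDiter a V).
Proof. move=> HV; elim: a => [|a IH] //=; exact: D_FIAx. Qed.

Lemma Diter_IsHom k G (V W : RFI k G) (eta : RHom V W) a :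
  FIAx V -> FIAx W -> IsHom eta -> IsHom (@FIDiterMap k G a V W eta).
Proof.
move=> HV HW He; elim: a => [|a IH] //=.
apply: D_IsHom => //; exact: Diter_FIAx.
Qed.

Lemma bump_unbump h i : i != h -> bump h (unbump h i) = i.
Proof. rewrite /bump /unbump. case: (leqP h i); case: (ltnP h i) => /=; lia. Qed.
Lemma bump_small h i : (i < h)%N -> bump h i = i.
Proof. rewrite /bump; case: leqP => /=; lia. Qed.
Lemma bump_ge h i : (h <= i)%N -> bump h i = i.+1.
Proof. rewrite /bump => ->; lia. Qed.

Fixpoint deg (a n : nat) : nat := match a with 0 => n | a'.+1 => deg a' n.+1 end.
Lemma degE a n : deg a n = (n + a)%N.
Proof. elim: a n => [|a IH] n /=; first by rewrite addn0. by rewrite IH addSnnS. Qed.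

Fixpoint plusN (G : AbsGroup) (a : nat) : forall n m, FIHom G n m -> FIHom G (deg a n) (deg a m) :=
  match a return forall n m, FIHom G n m -> FIHom G (deg a n) (deg a m) with
  | 0 => fun n m phi => phi
  | a'.+1 => fun n m phi => plusN a' (FIplus phi) end.

Lemma plusN_bump (G : AbsGroup) a : forall n (phi : FIHom G n n.+1) q, (q <= n)%N ->
  (forall i, val (hf phi i) = bump q i) -> (forall i, hg phi i = gone G) ->
  (forall i, val (hf (plusN a phi) i) = bump q i) /\ (forall i, hg (plusN a phi) i = gone G).
Proof.
elim: a => [|a IH] n phi q hq hf1 hg1 //=.
apply: IH; first by lia.
- move=> i /=; rewrite /plus_f; case: (unliftP ord_max i) => [j ->|->] /=.
    have h1 : (hf phi j < n.+1)%N := ltn_ord _.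
    have h2 : (j < n)%N := ltn_ord j.
    by rewrite (bump_small h1) (bump_small h2) hf1.
  by rewrite bump_ge.
- move=> i /=; rewrite /plus_g; by case: (unliftP ord_max i) => [j _|_].
Qed.

Lemma plusN_iota (G : AbsGroup) a n :
  (forall i, val (hf (plusN a (FIiota G n)) i) = bump n i) /\
  (forall i, hg (plusN a (FIiota G n)) i = gone G).
Proof. by apply: plusN_bump. Qed.

Section Based.
Variables (k : comPzRingType) (G : AbsGroup) (P : RFI k G).

Definition good a m (e : E P (deg a m)) : Prop :=
  forall j : 'I_(deg a m), (m <= j)%N -> exists i, hf (tagged e) i = j.

Definition Based (U : RFI k G) (a : nat) (c : forall m, fv U m -> E P (deg a m) -> k) : Prop :=
  (forall m (x y : fv U m), req x y <-> forall e, @good a m e -> c m x e = c m y e) /\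
  (forall m e, c m (r0 _) e = 0) /\
  (forall m (x y : fv U m) e, c m (radd x y) e = c m x e + c m y e) /\
  (forall m (x : fv U m) e, c m (ropp x) e = - c m x e) /\
  (forall n m (phi : FIHom G n m) (x : fv U n) e,
      c m (fact (r:=U) phi x) (bact (plusN a phi) e) = c n x e) /\
  (forall n m (phi : FIHom G n m) (x : fv U n) e,
      ~ (exists e', bact (plusN a phi) e' = e) -> c m (fact (r:=U) phi x) e = 0) /\
  (forall n m (phi : FIHom G n m) (x : fv U m), exists z : fv U n,
      forall e, c n z e = c m x (bact (plusN a phi) e)).

Definition pre n m (phi : FIHom G n m) (e : E P m) : option (E P n) :=
  match excluded_middle_informative (exists e', bact phi e' = e) with
  | left H => Some (proj1_sig (constructive_indefinite_description _ H))
  | right _ => None end.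
Lemma pre_some n m (phi : FIHom G n m) e e' : pre phi e = Some e' -> bact phi e' = e.
Proof.
rewrite /pre; case: excluded_middle_informative => // H [<-].
exact: proj2_sig (constructive_indefinite_description _ H).
Qed.
Lemma pre_none n m (phi : FIHom G n m) e : pre phi e = None -> ~ exists e', bact phi e' = e.
Proof. by rewrite /pre; case: excluded_middle_informative. Qed.

Fixpoint pullb n m (phi : FIHom G n m) (l : seq (k * E P m)) : seq (k * E P n) :=
  match l with [::] => [::] | x :: l' =>
    match pre phi x.2 with Some e' => (x.1, e') :: pullb phi l' | None => pullb phi l' end end.

Lemma coef_pullb n m (phi : FIHom G n m) l e : coef e (pullb phi l) = coef (bact phi e) l.
Proof.
elim: l => [|x l IH] /=; first by rewrite !coef_nil.
case E1 : (pre phi x.2) => [e1|].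
  rewrite !coef_cons IH /=; congr (_ + _).
  have <- := pre_some E1.
  have -> : pb (e1 = e) = pb (bact phi e1 = bact phi e).
    apply: pb_eq; split => [->//|]; exact: bact_inj.
  done.
rewrite coef_cons IH.
have -> : pb (x.2 = bact phi e) = false.
  apply/pbP => h; apply: (pre_none E1); by exists e.
by rewrite add0r.
Qed.

Lemma Based_W : @Based (W P) 0 (fun m x e => coef e x).
Proof.
split.
  move=> m x y; split => [h e _|h e]; first exact: h.
  apply: h => j hj; exfalso; move: hj; rewrite leqNgt; by rewrite /= ltn_ord.
split; first by move=> m e; exact: coef_nil.
split; first by move=> m x y e; exact: coef_cat.
split; first by move=> m x e; exact: coef_opp.
split; first by move=> n m phi x e; exact: coef_act.
split; first by move=> n m phi x e; exact: coef_act0.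
move=> n m phi x; exists (pullb phi x) => e; exact: coef_pullb.
Qed.
End Based.

Section BasedD.
Variables (k : comPzRingType) (G : AbsGroup) (P : RFI k G).
Variables (a : nat).
Local Notation psi m := (plusN a (FIiota G m)).

Lemma ord_m m : (m < deg a m.+1)%N. Proof. rewrite degE; lia. Qed.

Lemma good_miss m (e : E P (deg a.+1 m)) :
  @good _ _ P a.+1 m e -> ~ exists e', bact (psi m) e' = e.
Proof.
move=> hg [e' he]; subst e.
have [i hi] := hg (Ordinal (ord_m m)) (leqnn m).
simpl in hi.
have := congr1 val hi => /=. rewrite (plusN_iota G a m).1 => hb.
by move: (neq_bump m (hf (tagged e') i)); rewrite hb eqxx.
Qed.

Lemma good_weak m (e : E P (deg a.+1 m)) : @good _ _ P a.+1 m e -> @good _ _ P a m.+1 e.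
Proof. move=> hg j hj; apply: hg; exact: ltnW. Qed.

Lemma factor m (e : E P (deg a m.+1)) :
  (forall i, val (hf (tagged e) i) != m) -> exists e', bact (psi m) e' = e.
Proof.
move=> hne.
have H : forall i, exists i' : 'I_(deg a m), hf (psi m) i' = hf (tagged e) i.
  move=> i; set v := val (hf (tagged e) i).
  have hv : (v < deg a m.+1)%N := ltn_ord _.
  have hvm : v != m := hne i.
  have hu : (unbump m v < deg a m)%N.
    move: hv hvm; rewrite !degE /unbump; case: ltnP => /=; lia.
  exists (Ordinal hu); apply: val_inj => /=.
  by rewrite (plusN_iota G a m).1 /= bump_unbump.
pose f := fun i => proj1_sig (constructive_indefinite_description _ (H i)).
have hfP : forall i, hf (psi m) (f i) = hf (tagged e) i.
  move=> i; exact: proj2_sig (constructive_indefinite_description _ (H i)).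
have finj : injective f.
  move=> i1 i2 h; apply: (@hinj _ _ _ (tagged e)); by rewrite -!hfP h.
exists (existT _ (tag e) {| hf := f; hinj := finj; hg := hg (tagged e) |}).
rewrite /bact /=.
have -> : FIcomp (psi m) {| hf := f; hinj := finj; hg := hg (tagged e) |} = tagged e.
  apply: FIext_eq; split => i /=; first exact: hfP.
  by rewrite (plusN_iota G a m).2 gmulg1.
by case: e {hne H f hfP finj}.
Qed.

Lemma good_step m (e : E P (deg a m.+1)) :
  @good _ _ P a m.+1 e -> ~ (exists e', bact (psi m) e' = e) -> @good _ _ P a.+1 m e.
Proof.
move=> hg nf j hj.
case: (ltnP m j) => hmj; first exact: hg.
have ej : nat_of_ord j = m by apply/eqP; rewrite eqn_leq hmj hj.
case: (classic (exists i, hf (tagged e) i = j)) => // ni.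
exfalso; apply: nf; apply: factor => i; apply/eqP => h; apply: ni; exists i.
apply: val_inj; rewrite h; exact: esym ej.
Qed.

Lemma good_shift n (e : E P (deg a n)) : @good _ _ P a n e -> @good _ _ P a n.+1 (bact (psi n) e).
Proof.
move=> hg j hj.
have hu : (unbump n j < deg a n)%N.
  have := ltn_ord j; move: hj; rewrite /unbump; move: (nat_of_ord j) => v.
  rewrite !degE; case: ltnP => /=; lia.
have hn : (n <= Ordinal hu)%N by move: hj; rewrite /= /unbump; case: ltnP => /=; lia.
have [i hi] := hg _ hn.
exists i; apply: val_inj => /=.
rewrite hi (plusN_iota G a n).1 /= bump_unbump //.
apply/eqP => h; move: hj; rewrite h; lia.
Qed.

Variables (U : RFI k G) (c : forall m, fv U m -> E P (deg a m) -> k).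
Hypothesis HB : @Based k G P U a c.

Lemma Based_D : @Based k G P (FID U) a.+1 (fun m x e => @c m.+1 x e).
Proof.
move: HB => [A1 [A0 [Aadd [Aopp [A3a [A3b A6]]]]]].
split.
  move=> m x y; split.
  - move=> [z hz] e ge.
    have := (A1 _ _ _).1 hz e (good_weak ge).
    rewrite Aadd Aopp (A3b _ _ _ _ _ (good_miss ge)) => /eqP.
    by rewrite subr_eq0 => /eqP.
  - move=> h. have [z hz] := A6 _ _ (FIiota G m) (radd x (ropp y)).
    exists z. apply/(A1 _ _ _) => e ge.
    case: (classic (exists e', bact (psi m) e' = e)) => [[e' <-]|ne].
      by rewrite A3a hz.
    have g1 := good_step ge ne.
    by rewrite (A3b _ _ _ _ _ ne) Aadd Aopp (h e g1) subrr.
split; first by move=> m e; exact: A0.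
split; first by move=> m x y e; exact: Aadd.
split; first by move=> m x e; exact: Aopp.
split; first by move=> n m phi x e; exact: (A3a _ _ (FIplus phi)).
split; first by move=> n m phi x e; exact: (A3b _ _ (FIplus phi)).
move=> n m phi x; exact: (A6 _ _ (FIplus phi)).
Qed.

Lemma Based_inj n (x : fv U n) : req (fact (r:=U) (FIiota G n) x) (r0 _) -> req x (r0 _).
Proof.
move: HB => [A1 [A0 [Aadd [Aopp [A3a [A3b A6]]]]]].
move=> h; apply/(A1 _ _ _) => e ge.
rewrite A0 -(A3a _ _ (FIiota G n)).
by rewrite ((A1 _ _ _).1 h _ (good_shift ge)) A0.
Qed.
End BasedD.

Fixpoint coefIter k G (P : RFI k G) (a : nat) : forall m, fv (FIDiter a (W P)) m -> E P (deg a m) -> k :=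
  match a return forall m, fv (FIDiter a (W P)) m -> E P (deg a m) -> k with
  | 0 => fun m x e => coef e x
  | a'.+1 => fun m x e => @coefIter k G P a' m.+1 x e end.

Lemma Based_iter k G (P : RFI k G) a : @Based k G P (FIDiter a (W P)) a (@coefIter k G P a).
Proof. elim: a => [|a IH]; first exact: Based_W. exact: Based_D IH. Qed.

Lemma IsHom_id k G (V : RFI k G) : FIAx V -> IsHom (fun n (x : fv V n) => x).
Proof.
move=> HV; split.
  move=> n; split; last split.
  - by move=> x x' h.
  - move=> x y; exact (mrefl (FIA_mod HV n) _).
  - move=> c x; exact (mrefl (FIA_mod HV n) _).
move=> n m phi x; exact (mrefl (FIA_mod HV m) _).
Qed.

Lemma retract_iter k G (V U : RFI k G) (HV : FIAx V) (s : RHom V U) (p : RHom U V) :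
  (forall n x, req (p n (s n x)) x) -> forall b n (x : fv (FIDiter b V) n),
  req (@FIDiterMap k G b U V p n (@FIDiterMap k G b V U s n x)) x.
Proof.
move=> h b; elim: b => [|b IH] n x //=.
apply: reqD; first exact: Diter_FIAx.
exact: IH.
Qed.

Lemma proj_inj k G (P : RFI k G) (HP : FIAx P) (Hproj : Projective P) b n
  (x : fv (FIDiter b P) n) :
  req (fact (r:=FIDiter b P) (FIiota G n) x) (r0 _) -> req x (r0 _).
Proof.
move=> hx.
have HW := @W_FIAx k G P.
have [s [Hs Hps]] := Hproj P (W P) HP HW (@pmap k G P) (pmap_IsHom HP) (pmap_Surj HP)
  (fun n x => x) (IsHom_id HP).
have HDP := Diter_FIAx b HP. have HDW := Diter_FIAx b HW.
have Hsb := Diter_IsHom b HP HW Hs.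
have Hpb := Diter_IsHom b HW HP (pmap_IsHom HP).
set sb := @FIDiterMap k G b P (W P) s.
set pbm := @FIDiterMap k G b (W P) P (@pmap k G P).
have h1 : req (fact (r:=FIDiter b (W P)) (FIiota G n) (sb n x)) (r0 _).
  refine (mtrans (FIA_mod HDW _) (msym (FIA_mod HDW _) (hom_nat Hsb _ _)) _).
  refine (mtrans (FIA_mod HDW _) (lin_cong (hom_lin Hsb _) hx) _).
  exact (lin0 (FIA_mod HDP _) (FIA_mod HDW _) (hom_lin Hsb _)).
have h2 := Based_inj (Based_iter P b) h1.
refine (mtrans (FIA_mod HDP _) (msym (FIA_mod HDP _) (@retract_iter k G P (W P) HP s (@pmap k G P) Hps b n x)) _).
refine (mtrans (FIA_mod HDP _) (lin_cong (hom_lin Hpb _) h2) _).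
exact (lin0 (FIA_mod HDW _) (FIA_mod HDP _) (hom_lin Hpb _)).
Qed.

Lemma msub0r k (M : RMod k) (HMM : ModAx M) (x : M) : req (radd x (ropp (r0 M))) x.
Proof. refine (mtrans HMM (maddl HMM _ (mopp0 HMM)) _). exact (madd0r HMM _). Qed.

Lemma msub_cancel k (M : RMod k) (HMM : ModAx M) (x a : M) :
  req (radd (radd x (ropp a)) (ropp x)) (ropp a).
Proof.
refine (mtrans HMM (maddC HMM _ _) _).
refine (mtrans HMM (maddA HMM _ _ _) _).
refine (mtrans HMM (maddr HMM _ (maddN HMM _)) _).
exact (madd0 HMM _).
Qed.

Lemma chase k G (Q : nat -> RFI k G) (dl : forall j, RHom (Q j.+1) (Q j))
  (HQ : forall j, FIAx (Q j)) (Hd : forall j, IsHom (dl j))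
  (Hdd : forall j n x, req (dl j n (dl j.+1 n x)) (r0 _))
  (Hinj : forall j n (x : fv (Q j) n), req (fact (r:=Q j) (FIiota G n) x) (r0 _) -> req x (r0 _))
  j n :
  @HZeroS k G Q dl j n -> @HZeroS k G Q dl j.+1 n.+1 ->
  @HZeroS k G (fun j => FID (Q j)) (fun j => FIDmap (dl j)) j.+1 n.
Proof.
move=> H0 H1 x [z hz].
have M1 := FIA_mod (HQ j.+1) n.+1.
have M0 := FIA_mod (HQ j) n.
have Mj := FIA_mod (HQ j) n.+1.
have M2 := FIA_mod (HQ j.+2) n.+1.
have M2n := FIA_mod (HQ j.+2) n.
have M3 := FIA_mod (HQ j.+3) n.+1.
have M1n := FIA_mod (HQ j.+1) n.
have hdx : req (dl j.+1 n.+1 x) (fact (r:=Q j.+1) (FIiota G n) z).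
  exact (mtrans M1 (msym M1 (msub0r M1 _)) hz).
have hA : req (dl j n z) (r0 _).
  apply: Hinj.
  refine (mtrans Mj (msym Mj (hom_nat (Hd j) _ _)) _).
  refine (mtrans Mj (lin_cong (hom_lin (Hd j) _) (msym M1 hdx)) _).
  exact (Hdd _ _ _).
have [u hu] := H0 z hA.
have hC : req (dl j.+1 n.+1 (radd x (ropp (fact (r:=Q j.+2) (FIiota G n) u)))) (r0 _).
  refine (mtrans M1 (lin_sub M2 M1 (hom_lin (Hd j.+1) _) _ _) _).
  apply (msubr M1).
  refine (mtrans M1 hdx _).
  refine (mtrans M1 (lin_cong (FIA_lin (HQ j.+1) _) (msym M1n hu)) _).
  exact (msym M1 (hom_nat (Hd j.+1) _ _)).
have [y hy] := H1 _ hC.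
exists y; exists (ropp u).
refine (mtrans M2 (maddr M2 _ hy) _).
refine (mtrans M2 (msub_cancel M2 _ _) _).
exact (msym M2 (lin_opp M2n M2 (FIA_lin (HQ j.+2) _) _)).
Qed.

Lemma iter_zero k G (V U X : RFI k G) (HX : FIAx X) (f : RHom U X) (g : RHom V U) :
  (forall n x, req (f n (g n x)) (r0 _)) -> forall b n (x : fv (FIDiter b V) n),
  req (@FIDiterMap k G b U X f n (@FIDiterMap k G b V U g n x)) (r0 _).
Proof.
move=> h b; elim: b => [|b IH] n x //=.
apply: reqD; first exact: Diter_FIAx.
exact: IH.
Qed.

Lemma ext_lt_shift w (c c' : int) n : c' = (c + 1)%R -> ext_lt_nat (eaddz w c) n -> ext_lt_nat (eaddz w c') n.+1.
Proof. move=> ->; case: w => //= z; lia. Qed.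

Theorem mainTheorem10 (k : comPzRingType) (G : AbsGroup) (V : RFI k G)
  (HV : FIAx V) (Hpres : PresentedFinite V)
  (P : nat -> RFI k G) (d : forall i, RHom (P i.+1) (P i)) (eps : RHom (P 0%N) V)
  (Hres : @IsProjRes k G V P d eps)
  (w : ExtZ) (Hw : @IsDwidth k G P d w) :
  forall a i : nat, (1 <= a)%N -> (1 <= i)%N ->
    @HDdegLe k G P d a i (eaddz w (- 1 + i%:Z - a%:Z)).
Proof.
move: Hres => [HP [Hproj [Hd [Heps [Hsurj [Hex0 Hex]]]]]].
have Hdd0 : forall j n x, req (d j n (d j.+1 n x)) (r0 _).
  move=> j n x; apply: (Hex j n _).2; exists x; exact (mrefl (FIA_mod (HP j.+1) n) _).
have Hexact : forall j n, @HZeroS k G P d j n.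
  move=> j n x hx; exact ((Hex j n x).1 hx).
have step : forall b j n,
    @HZeroS k G (fun j => FIDiter b (P j)) (fun j => @FIDiterMap k G b _ _ (d j)) j n ->
    @HZeroS k G (fun j => FIDiter b (P j)) (fun j => @FIDiterMap k G b _ _ (d j)) j.+1 n.+1 ->
    @HZeroS k G (fun j => FIDiter b.+1 (P j)) (fun j => @FIDiterMap k G b.+1 _ _ (d j)) j.+1 n.
  move=> b j n H0 H1.
  apply: (@chase k G (fun j => FIDiter b (P j)) (fun j => @FIDiterMap k G b _ _ (d j))) => //.
  - move=> jj; exact: Diter_FIAx.
  - move=> jj; apply: Diter_IsHom => //.
  - move=> jj nn x; exact: (iter_zero (HP jj) (Hdd0 jj)).
  - move=> jj nn x; exact: (proj_inj (HP jj) (Hproj jj)).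
have Claim : forall b i, (1 <= i)%N ->
    @HDdegLe k G P d b.+1 i (eaddz w (- 1 + i%:Z - (b.+1)%:Z)).
  elim=> [|b IH] [|[|j]] // _.
  - have -> : (- 1 + (1%N)%:Z - (1%N)%:Z = - (1%N)%:Z)%R by lia.
    exact: Hw.1.
  - move=> n _; apply: step; exact: Hexact.
  - have -> : (- 1 + (1%N)%:Z - (b.+2)%:Z = - (b.+2)%:Z)%R by lia.
    exact: Hw.1.
  - move=> n hn; apply: step.
    + apply: (IH j.+1 isT n).
      have -> : (- 1 + (j.+1)%:Z - (b.+1)%:Z = - 1 + (j.+2)%:Z - (b.+2)%:Z)%R by lia.
      exact: hn.
    + apply: (IH j.+2 isT n.+1).
      apply: ext_lt_shift hn; lia.
move=> a i ha hi; case: a ha => // b _; exact: Claim.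
Qed.
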